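(* Let $E$ be a finite-dimensional real vector space ordered by a closed proper cone $C$, fix a norm $\|\cdot\|$ on $E$, let $0<T\leq\infty$, and let $U\subset E$ be a nonempty convex open set. Let $f\colon[0,T)\times U\to E$ be a continuous map such that $f(t,\cdot)$ is convex on $U$ for every $t\in[0,T)$. Then $f$ is locally Lipschitz, i.e. for every compact $K\subset U$ and every $t\in[0,T)$, $$L_{t,K}(f)=\sup_{0\leq\tau\leq t,\;x_1,x_2\in K,\;x_1\neq x_2}\frac{\|f(\tau,x_2)-f(\tau,x_1)\|}{\|x_2-x_1\|}<\infty.$$
   Context: A cone $C$ ($\lambda C\subset C$ for $\lambda>0$) is proper if $C+C\subset C$ and $C\cap(-C)=\{0\}$; it induces the partial order $x\leq y$ iff $y-x\in C$. A map $g\colon D\to E$ is convex if $D$ is convex and $g(\lambda x+(1-\lambda)y)\leq\lambda g(x)+(1-\lambda)g(y)$ (in the order induced by $C$) for all $x,y\in D$, $\lambda\in[0,1]$. *)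

(* Defs.v *)
From Stdlib Require Import Reals.
From Stdlib Require Fin.
Open Scope R_scope.

(* E = R^n, the model of an n-dimensional real vector space. *)
Definition E (n : nat) := Fin.t n -> R.

Definition vadd {n} (x y : E n) : E n := fun i => x i + y i.
Definition vscal {n} (a : R) (x : E n) : E n := fun i => a * x i.
Definition vopp {n} (x : E n) : E n := fun i => - x i.
Definition vsub {n} (x y : E n) : E n := fun i => x i - y i.
Definition vzero {n} : E n := fun _ => 0.

Definition is_norm {n} (N : E n -> R) : Prop :=
  (forall x, 0 <= N x) /\
  (forall x, N x = 0 -> forall i, x i = 0) /\
  (forall a x, N (vscal a x) = Rabs a * N x) /\
  (forall x y, N (vadd x y) <= N x + N y).

Definition is_open {n} (N : E n -> R) (U : E n -> Prop) : Prop :=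
  forall x, U x -> exists r, 0 < r /\ forall y, N (vsub y x) < r -> U y.

Definition is_closed {n} (N : E n -> R) (C : E n -> Prop) : Prop :=
  is_open N (fun x => ~ C x).

Definition seq_cv {n} (N : E n -> R) (u : nat -> E n) (l : E n) : Prop :=
  forall eps, 0 < eps -> exists M, forall k, (M <= k)%nat -> N (vsub (u k) l) < eps.

Definition is_compact {n} (N : E n -> R) (K : E n -> Prop) : Prop :=
  forall u : nat -> E n, (forall k, K (u k)) ->
    exists (phi : nat -> nat) (l : E n),
      (forall k, (phi k < phi (S k))%nat) /\ K l /\ seq_cv N (fun k => u (phi k)) l.

Definition is_convex_set {n} (U : E n -> Prop) : Prop :=
  forall x y a, U x -> U y -> 0 <= a <= 1 ->
    U (vadd (vscal a x) (vscal (1 - a) y)).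

Definition is_proper_cone {n} (C : E n -> Prop) : Prop :=
  (forall a x, 0 < a -> C x -> C (vscal a x)) /\
  (forall x y, C x -> C y -> C (vadd x y)) /\
  C vzero /\
  (forall x, C x -> C (vopp x) -> x = vzero).

Definition cle {n} (C : E n -> Prop) (x y : E n) : Prop := C (vsub y x).

Definition is_convex_map {n} (C : E n -> Prop) (U : E n -> Prop) (g : E n -> E n) : Prop :=
  is_convex_set U /\
  forall x y a, U x -> U y -> 0 <= a <= 1 ->
    cle C (g (vadd (vscal a x) (vscal (1 - a) y)))
          (vadd (vscal a (g x)) (vscal (1 - a) (g y))).

(* time horizon T ∈ (0, +oo]: None stands for +oo *)
Definition pos_horizon (T : option R) : Prop :=
  match T with Some T' => 0 < T' | None => True end.

Definition in_time (T : option R) (t : R) : Prop :=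
  0 <= t /\ match T with Some T' => t < T' | None => True end.

Definition cont_on {n} (N : E n -> R) (T : option R) (U : E n -> Prop)
  (f : R -> E n -> E n) : Prop :=
  forall t x, in_time T t -> U x ->
    forall eps, 0 < eps -> exists delta, 0 < delta /\
      forall s y, in_time T s -> U y -> Rabs (s - t) < delta -> N (vsub y x) < delta ->
        N (vsub (f s y) (f t x)) < eps.

(* Main.v *)
Require Import Defs.
From Stdlib Require Import Reals ZArith Lra Lia List Rtopology FunctionalExtensionality ClassicalEpsilon Classical.
Open Scope R_scope.

Definition sincr (phi : nat -> nat) := forall k, (phi k < phi (S k))%nat.

Lemma sincr_ge phi : sincr phi -> forall k, (k <= phi k)%nat.
Proof. intros H k; induction k; [lia|]. specialize (H k); lia. Qed.

Lemma sincr_mono phi : sincr phi -> forall a b, (a <= b)%nat -> (phi a <= phi b)%nat.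
Proof. intros H a b Hab; induction Hab; [lia|]. specialize (H m); lia. Qed.

Lemma sincr_comp phi psi : sincr phi -> sincr psi -> sincr (fun k => phi (psi k)).
Proof.
  intros H1 H2 k. specialize (H2 k).
  assert (phi (S (psi k)) <= phi (psi (S k)))%nat by (apply (sincr_mono _ H1); lia). 
  specialize (H1 (psi k)); lia.
Qed.

Lemma Un_cv_sub u l psi : sincr psi -> Un_cv u l -> Un_cv (fun k => u (psi k)) l.
Proof.
  intros Hp H eps He. destruct (H eps He) as [M HM]. exists M. intros k Hk.
  apply HM. pose proof (sincr_ge _ Hp k); lia.
Qed.

Lemma choice2 (A B : Type) (P : A -> B -> Prop) :
  (forall x, exists y, P x y) -> exists g : A -> B, forall x, P x (g x).
Proof.
  intros H. exists (fun x => proj1_sig (constructive_indefinite_description _ (H x))).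
  intro x. exact (proj2_sig (constructive_indefinite_description _ (H x))).
Qed.

Lemma BW1 (u : nat -> R) (B : R) : (forall k, Rabs (u k) <= B) ->
  exists phi l, sincr phi /\ Un_cv (fun k => u (phi k)) l.
Proof.
  intros Hb.
  destruct (Bolzano_Weierstrass u (fun c => -B <= c <= B) (compact_P3 _ _)) as [l Hl].
  { intro k; specialize (Hb k); unfold Rabs in Hb; destruct (Rcase_abs (u k)); lra. }
  assert (Hg : forall m Nn : nat, exists p, (Nn <= p)%nat /\ Rabs (u p - l) < / (INR m + 1)).
  { intros m Nn.
    assert (Hpos : 0 < / (INR m + 1)) by (apply Rinv_0_lt_compat; pose proof (pos_INR m); lra).
    destruct (Hl (disc l (mkposreal _ Hpos)) Nn) as [p [Hp1 Hp2]].
    - exists (mkposreal _ Hpos). intros y Hy; exact Hy.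
    - exists p; split; auto. }
  assert (Hg' : forall mN : nat*nat, exists p, (snd mN <= p)%nat /\ Rabs (u p - l) < / (INR (fst mN) + 1)) by (intros [m Nn]; apply Hg).
  apply choice2 in Hg'. destruct Hg' as [g0 Hg0].
  assert (Hg2 : exists g : nat -> nat -> nat, forall m Nn, (Nn <= g m Nn)%nat /\ Rabs (u (g m Nn) - l) < / (INR m + 1)).
  { exists (fun m Nn => g0 (m, Nn)). intro m. intro Nn. exact (Hg0 (m, Nn)). }
  clear g0 Hg0 Hg. destruct Hg2 as [g Hg].
  set (phi := fix phi k := match k with O => g O O | S k' => g k (S (phi k')) end).
  exists phi, l. split.
  - intro k. simpl. destruct (Hg (S k) (S (phi k))); lia.
  - intros eps He.
    destruct (archimed (/ eps)) as [Ha _].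
    assert (0 <= up (/ eps))%Z.
    { apply le_IZR. pose proof (Rinv_0_lt_compat _ He). lra. }
    exists (Z.to_nat (up (/ eps))). intros k Hk.
    unfold Rdist.
    assert (Rabs (u (phi k) - l) < / (INR k + 1)).
    { destruct k; simpl; apply Hg. }
    apply Rlt_le_trans with (1 := H0).
    apply le_INR in Hk. rewrite INR_IZR_INZ, Z2Nat.id in Hk by auto.
    pose proof (Rinv_0_lt_compat _ He).
    rewrite <- (Rinv_inv eps). apply Rinv_le_contravar; lra.
Qed.
Fixpoint fin_enum (n : nat) : list (Fin.t n) :=
  match n with O => nil | S m => Fin.F1 :: map Fin.FS (fin_enum m) end.

Lemma fin_enum_all n (i : Fin.t n) : In i (fin_enum n).
Proof. induction i; simpl; [left; auto | right; apply in_map; auto]. Qed.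

Lemma vext {n} (x y : E n) : (forall i, x i = y i) -> x = y.
Proof. intro H; apply functional_extensionality; exact H. Qed.

Lemma N_zero {n} (N : E n -> R) : is_norm N -> N vzero = 0.
Proof.
  intros (H1 & H2 & H3 & H4).
  replace (@vzero n) with (vscal 0 (@vzero n)) by (apply vext; intro; unfold vscal, vzero; ring).
  rewrite H3, Rabs_R0; ring.
Qed.

Lemma N_nonneg {n} (N : E n -> R) x : is_norm N -> 0 <= N x.
Proof. intros (H1 & _); apply H1. Qed.

Lemma N_scal {n} (N : E n -> R) a x : is_norm N -> N (vscal a x) = Rabs a * N x.
Proof. intros (_ & _ & H3 & _); apply H3. Qed.

Lemma N_add {n} (N : E n -> R) x y : is_norm N -> N (vadd x y) <= N x + N y.
Proof. intros (_ & _ & _ & H4); apply H4. Qed.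

Lemma N_eq0 {n} (N : E n -> R) x : is_norm N -> N x = 0 -> x = vzero.
Proof. intros (_ & H2 & _) H; apply vext; intro i; apply (H2 x H). Qed.

Lemma N_sub_sym {n} (N : E n -> R) x y : is_norm N -> N (vsub x y) = N (vsub y x).
Proof.
  intro HN. replace (vsub x y) with (vscal (-1) (vsub y x)) by (apply vext; intro; unfold vscal, vsub; ring).
  rewrite N_scal by auto. replace (Rabs (-1)) with 1 by (unfold Rabs; destruct (Rcase_abs (-1)); lra); ring.
Qed.

Lemma N_tri {n} (N : E n -> R) x y z : is_norm N -> N (vsub x y) <= N (vsub x z) + N (vsub z y).
Proof.
  intro HN. replace (vsub x y) with (vadd (vsub x z) (vsub z y)) by (apply vext; intro; unfold vadd, vsub; ring).
  apply N_add; auto.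
Qed.

Lemma N_opp {n} (N : E n -> R) x : is_norm N -> N (vopp x) = N x.
Proof.
  intro HN. replace (vopp x) with (vscal (-1) x) by (apply vext; intro; unfold vscal, vopp; ring).
  rewrite N_scal by auto. replace (Rabs (-1)) with 1 by (unfold Rabs; destruct (Rcase_abs (-1)); lra); ring.
Qed.

Lemma N_sub0 {n} (N : E n -> R) x : is_norm N -> N (vsub x vzero) = N x.
Proof. intro. f_equal. apply vext; intro; unfold vsub, vzero; ring. Qed.

Definition wsum {n} (w : Fin.t n -> R) (l : list (Fin.t n)) (x : E n) : R :=
  fold_right (fun i acc => w i * Rabs (x i) + acc) 0 l.

Lemma wsum_nonneg {n} w l (x : E n) : (forall i, 0 <= w i) -> 0 <= wsum w l x.
Proof.
  intro Hw; induction l; simpl; [lra|].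
  pose proof (Hw a); pose proof (Rabs_pos (x a)). nra.
Qed.

Lemma wsum_mono {n} w l (x y : E n) : (forall i, 0 <= w i) ->
  (forall i, Rabs (x i) <= Rabs (y i)) -> wsum w l x <= wsum w l y.
Proof.
  intros Hw Hxy; induction l; simpl; [lra|].
  pose proof (Hw a); pose proof (Hxy a). nra.
Qed.

Lemma wsum_scal {n} w l a (x : E n) : wsum w l (vscal a x) = Rabs a * wsum w l x.
Proof.
  induction l; simpl; [ring|]. rewrite IHl. unfold vscal. rewrite Rabs_mult. ring.
Qed.

Lemma wsum_tri {n} w l (x y : E n) : (forall i, 0 <= w i) ->
  wsum w l (vadd x y) <= wsum w l x + wsum w l y.
Proof.
  intros Hw; induction l; simpl; [lra|].
  pose proof (Hw a); pose proof (Rabs_triang (x a) (y a)). unfold vadd at 1.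
  assert (w a * Rabs (x a + y a) <= w a * (Rabs (x a) + Rabs (y a))) by (apply Rmult_le_compat_l; auto). lra.
Qed.

Lemma wsum_coord {n} w l (x : E n) i : In i l -> w i * Rabs (x i) <= wsum w l x.
Abort.

Definition ev {n} (i : Fin.t n) : E n := fun j => if Fin.eq_dec i j then 1 else 0.

Lemma N_le_wsum {n} (N : E n -> R) : is_norm N -> forall l (x : E n),
  (forall j, ~ In j l -> x j = 0) -> N x <= wsum (fun i => N (ev i)) l x.
Proof.
  intros HN l. induction l as [|i l IH]; intros x Hx; simpl.
  - replace x with (@vzero n) by (apply vext; intro j; symmetry; apply Hx; auto).
    rewrite N_zero; auto; lra.
  - set (x' := fun j => if Fin.eq_dec i j then 0 else x j).
    assert (Hx' : x = vadd x' (vscal (x i) (ev i))).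
    { apply vext; intro j; unfold vadd, vscal, x', ev. destruct (Fin.eq_dec i j); subst; ring. }
    assert (H1 : N x' <= wsum (fun i => N (ev i)) l x').
    { apply IH. intros j Hj. unfold x'. destruct (Fin.eq_dec i j); auto.
      apply Hx. intros [?|?]; auto. }
    assert (H2 : wsum (fun i => N (ev i)) l x' <= wsum (fun i => N (ev i)) l x).
    { apply wsum_mono. intro; apply N_nonneg; auto.
      intro j; unfold x'. destruct (Fin.eq_dec i j); [rewrite Rabs_R0; apply Rabs_pos | lra]. }
    rewrite Hx' at 1. eapply Rle_trans; [apply N_add; auto|].
    rewrite N_scal by auto. lra.
Qed.

Lemma wsum_cv0 {n} w l (z : nat -> E n) : (forall i, 0 <= w i) ->
  (forall i, In i l -> Un_cv (fun k => z k i) 0) ->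
  forall eps, 0 < eps -> exists M, forall k, (M <= k)%nat -> wsum w l (z k) < eps.
Proof.
  intros Hw. induction l as [|i l IH]; intros Hc eps He; simpl.
  - exists O; intros; lra.
  - destruct (IH (fun j Hj => Hc j (or_intror Hj)) (eps/2)) as [M1 HM1]; [lra|].
    assert (Hpos : 0 < eps / (2 * (w i + 1))).
    { pose proof (Hw i). apply Rdiv_lt_0_compat; lra. }
    destruct (Hc i (or_introl eq_refl) _ Hpos) as [M2 HM2].
    exists (max M1 M2). intros k Hk.
    assert (A1 := HM1 k ltac:(lia)). assert (A2 := HM2 k ltac:(lia)).
    unfold Rdist in A2. rewrite Rminus_0_r in A2.
    pose proof (Hw i).
    assert (w i * Rabs (z k i) <= (w i + 1) * (eps / (2 * (w i + 1)))).
    { pose proof (Rabs_pos (z k i)). nra. }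
    replace ((w i + 1) * (eps / (2 * (w i + 1)))) with (eps/2) in H0 by (field; lra).
    lra.
Qed.

Lemma coordBW {n} (u : nat -> E n) (B : R) : (forall k i, Rabs (u k i) <= B) ->
  forall l : list (Fin.t n), exists phi (v : E n), sincr phi /\
    forall i, In i l -> Un_cv (fun k => u (phi k) i) (v i).
Proof.
  intros Hb l. induction l as [|i l IH].
  - exists (fun k => k), (u 0%nat). split; [intro; lia | intros ? []].
  - destruct IH as [phi [v [Hphi Hv]]].
    destruct (BW1 (fun k => u (phi k) i) B (fun k => Hb _ _)) as [psi [li [Hpsi Hli]]].
    exists (fun k => phi (psi k)), (fun j => if Fin.eq_dec j i then li else v j).
    split; [apply sincr_comp; auto|].
    intros j Hj. destruct (Fin.eq_dec j i).
    + subst; exact Hli.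
    + destruct Hj as [Hj|Hj]; [congruence|].
      apply (Un_cv_sub (fun k => u (phi k) j)); auto.
Qed.
Lemma wsum_coord {n} w l (x : E n) i : (forall j, 0 <= w j) -> In i l -> w i * Rabs (x i) <= wsum w l x.
Proof.
  intros Hw; induction l as [|j l IH]; simpl; [tauto|]. intros [<-|H].
  - pose proof (wsum_nonneg w l x Hw); lra.
  - pose proof (IH H). pose proof (Hw j); pose proof (Rabs_pos (x j)). nra.
Qed.

Definition Sn {n} (x : E n) := wsum (fun _ => 1) (fin_enum n) x.

Lemma Sn_coord {n} (x : E n) i : Rabs (x i) <= Sn x.
Proof.
  pose proof (wsum_coord (fun _ => 1) (fin_enum n) x i (fun _ => Rle_0_1) (fin_enum_all n i)).
  unfold Sn; lra.
Qed.

Lemma coord_wsum_cv {n} w (u : nat -> E n) v : (forall i, 0 <= w i) ->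
  (forall i, Un_cv (fun k => u k i) (v i)) ->
  forall eps, 0 < eps -> exists M, forall k, (M <= k)%nat -> wsum w (fin_enum n) (vsub (u k) v) < eps.
Proof.
  intros Hw Hc. apply wsum_cv0; auto.
  intros i _ eps He. destruct (Hc i eps He) as [M HM]. exists M; intros k Hk.
  specialize (HM k Hk). unfold Rdist, vsub in *. rewrite Rminus_0_r; auto.
Qed.

Lemma coord_seq_cv {n} (N : E n -> R) (u : nat -> E n) v : is_norm N ->
  (forall i, Un_cv (fun k => u k i) (v i)) -> seq_cv N u v.
Proof.
  intros HN Hc eps He.
  destruct (coord_wsum_cv (fun i => N (ev i)) u v (fun i => N_nonneg N _ HN) Hc eps He) as [M HM].
  exists M; intros k Hk. eapply Rle_lt_trans; [|apply (HM k Hk)].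
  apply N_le_wsum; auto. intros j Hj; exfalso; apply Hj, fin_enum_all.
Qed.

Lemma seq_cv_sub {n} (N : E n -> R) u l psi : sincr psi -> seq_cv N u l -> seq_cv N (fun k => u (psi k)) l.
Proof.
  intros Hp H eps He. destruct (H eps He) as [M HM]. exists M. intros k Hk.
  apply HM. pose proof (sincr_ge _ Hp k); lia.
Qed.

Lemma N_lower {n} (N : E n -> R) : is_norm N -> exists c, 0 < c /\ forall x, Sn x <= c * N x.
Proof.
  intro HN. apply NNPP; intro Hno.
  assert (Hk : forall k : nat, exists x : E n, (INR k + 1) * N x < Sn x).
  { intro k. apply NNPP; intro H1. apply Hno. exists (INR k + 1). split.
    - pose proof (pos_INR k); lra.
    - intro x. apply Rnot_lt_le. intro H2. apply H1. exists x; auto. }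
  apply choice2 in Hk. destruct Hk as [x Hx].
  assert (HSpos : forall k, 0 < Sn (x k)).
  { intro k. specialize (Hx k). pose proof (N_nonneg N (x k) HN). pose proof (pos_INR k). nra. }
  set (y := fun k => vscal (/ Sn (x k)) (x k)).
  assert (HSy : forall k, Sn (y k) = 1).
  { intro k. unfold y, Sn. rewrite wsum_scal. fold (Sn (x k)).
    specialize (HSpos k). rewrite Rabs_right by (left; apply Rinv_0_lt_compat; auto). field; lra. }
  assert (HNy : forall k, N (y k) * (INR k + 1) < 1).
  { intro k. unfold y. rewrite N_scal by auto. specialize (HSpos k). specialize (Hx k).
    rewrite Rabs_right by (left; apply Rinv_0_lt_compat; auto).
    apply Rmult_lt_reg_l with (Sn (x k)); auto.
    replace (Sn (x k) * (/ Sn (x k) * N (x k) * (INR k + 1))) with ((INR k + 1) * N (x k)) by (field; lra).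
    lra. }
  destruct (coordBW y 1 (fun k i => ltac:(rewrite <- (HSy k); apply Sn_coord)) (fin_enum n))
    as [phi [v [Hphi Hv]]].
  assert (Hv' : forall i, Un_cv (fun k => y (phi k) i) (v i)) by (intro; apply Hv, fin_enum_all).
  assert (Hcv := coord_seq_cv N (fun k => y (phi k)) v HN Hv').
  assert (Hv0 : N v = 0).
  { apply Rle_antisym; [|apply N_nonneg; auto].
    apply Rnot_lt_le; intro Hpos.
    assert (Hh : 0 < N v / 2) by lra. destruct (Hcv _ Hh) as [M HM].
    destruct (archimed (2 / N v)) as [Ha _].
    assert (0 <= up (2 / N v))%Z.
    { apply le_IZR. assert (0 < 2 / N v) by (apply Rdiv_lt_0_compat; lra). lra. }
    set (k := max M (Z.to_nat (up (2 / N v)))).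
    assert (HMk := HM k ltac:(unfold k; lia)). cbv beta in HMk.
    pose proof (N_tri N v vzero (y (phi k)) HN) as Ht.
    rewrite (N_sub0 N v HN), (N_sub0 N (y (phi k)) HN), (N_sub_sym N v) in Ht by auto.
    pose proof (HNy (phi k)).
    assert (INR k <= INR (phi k)) by (apply le_INR, sincr_ge; auto).
    assert (IZR (up (2 / N v)) <= INR k).
    { rewrite INR_IZR_INZ. apply IZR_le. unfold k.
      rewrite <- (Z2Nat.id (up (2 / N v))) at 1 by auto. apply inj_le. lia. }
    assert (N (y (phi k)) * (2 / N v) < 1).
    { pose proof (N_nonneg N (y (phi k)) HN).
      assert (N (y (phi k)) * (2 / N v) <= N (y (phi k)) * (INR (phi k) + 1)) by (apply Rmult_le_compat_l; lra).
      lra. }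
    assert (N (y (phi k)) < N v / 2).
    { apply Rmult_lt_reg_r with (2 / N v). apply Rdiv_lt_0_compat; lra.
      replace (N v / 2 * (2 / N v)) with 1 by (field; lra). lra. }
    lra. }
  apply N_eq0 in Hv0; auto. subst v.
  destruct (coord_wsum_cv (fun _ => 1) (fun k => y (phi k)) vzero (fun _ => Rle_0_1) Hv' 1 Rlt_0_1) as [M HM].
  specialize (HM M (le_n _)). fold (Sn (vsub (y (phi M)) vzero)) in HM.
  replace (vsub (y (phi M)) vzero) with (y (phi M)) in HM by (apply vext; intro; unfold vsub, vzero; ring).
  rewrite HSy in HM. lra.
Qed.

Lemma BW_N {n} (N : E n -> R) (u : nat -> E n) B : is_norm N -> (forall k, N (u k) <= B) ->
  exists phi v, sincr phi /\ seq_cv N (fun k => u (phi k)) v.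
Proof.
  intros HN Hb. destruct (N_lower N HN) as [c [Hc Hl]].
  destruct (coordBW u (c * B) (fun k i => ltac:(eapply Rle_trans; [apply Sn_coord|];
     eapply Rle_trans; [apply Hl|]; apply Rmult_le_compat_l; [lra|apply Hb])) (fin_enum n))
    as [phi [v [Hphi Hv]]].
  exists phi, v; split; auto. apply coord_seq_cv; auto. intro; apply Hv, fin_enum_all.
Qed.
Lemma arch_inv eps : 0 < eps -> exists k0, forall k, (k0 <= k)%nat -> / (INR k + 1) < eps.
Proof.
  intro He. destruct (archimed (/ eps)) as [Ha _].
  assert (0 <= up (/ eps))%Z.
  { apply le_IZR. pose proof (Rinv_0_lt_compat _ He). lra. }
  exists (Z.to_nat (up (/ eps))). intros k Hk.
  apply le_INR in Hk. rewrite INR_IZR_INZ, Z2Nat.id in Hk by auto.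
  pose proof (Rinv_0_lt_compat _ He).
  rewrite <- (Rinv_inv eps). apply Rinv_lt_contravar; [|lra].
  apply Rmult_lt_0_compat; [lra|]. pose proof (pos_INR k); lra.
Qed.

Lemma small_seq (r : nat -> R) phi : (forall k, r k * (INR k + 1) <= 1) -> sincr phi ->
  forall eps, 0 < eps -> exists M, forall k, (M <= k)%nat -> r (phi k) < eps.
Proof.
  intros Hr Hp eps He. destruct (arch_inv eps He) as [k0 Hk0]. exists k0. intros k Hk.
  assert (Hle : (k0 <= phi k)%nat) by (pose proof (sincr_ge _ Hp k); lia).
  specialize (Hk0 _ Hle). specialize (Hr (phi k)).
  assert (0 < INR (phi k) + 1) by (pose proof (pos_INR (phi k)); lra).
  assert (r (phi k) <= / (INR (phi k) + 1)).
  { apply Rmult_le_reg_r with (INR (phi k) + 1); auto. rewrite Rinv_l; lra. }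
  lra.
Qed.

Lemma closed_lim {n} (N : E n -> R) (C : E n -> Prop) u l : is_closed N C ->
  (forall k, C (u k)) -> seq_cv N u l -> C l.
Proof.
  intros Hc Hu Hcv. apply NNPP; intro Hl. destruct (Hc l Hl) as [r [Hr Hb]].
  destruct (Hcv r Hr) as [M HM]. apply (Hb (u M)); auto.
Qed.

Lemma normality {n} (C : E n -> Prop) (N : E n -> R) : is_proper_cone C -> is_closed N C -> is_norm N ->
  exists kappa, 0 <= kappa /\ forall c v, C c -> C (vsub v c) -> N c <= kappa * N v.
Proof.
  intros HC Hcl HN. destruct HC as (Hsc & Had & H0 & Hanti).
  apply NNPP; intro Hno.
  assert (Hk : forall k : nat, exists p : E n * E n, C (fst p) /\ C (vsub (snd p) (fst p)) /\
     (INR k + 1) * N (snd p) < N (fst p)).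
  { intro k. apply NNPP; intro H1. apply Hno. exists (INR k + 1). split.
    - pose proof (pos_INR k); lra.
    - intros c v Hc Hv. apply Rnot_lt_le. intro H2. apply H1. exists (c, v); auto. }
  apply choice2 in Hk. destruct Hk as [p Hp].
  set (c := fun k => fst (p k)). set (v := fun k => snd (p k)).
  assert (Hcpos : forall k, 0 < N (c k)).
  { intro k. destruct (Hp k) as (_ & _ & H). pose proof (N_nonneg N (v k) HN). pose proof (pos_INR k).
    unfold c, v in *. nra. }
  set (c' := fun k => vscal (/ N (c k)) (c k)). set (v' := fun k => vscal (/ N (c k)) (v k)).
  assert (Hinv : forall k, 0 < / N (c k)) by (intro; apply Rinv_0_lt_compat; auto).
  assert (HNc : forall k, N (c' k) = 1).
  { intro k. unfold c'. rewrite N_scal by auto. rewrite Rabs_right by (left; apply Hinv). specialize (Hcpos k). field; lra. }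
  assert (HNv : forall k, N (v' k) * (INR k + 1) < 1).
  { intro k. unfold v'. rewrite N_scal by auto. rewrite Rabs_right by (left; apply Hinv).
    destruct (Hp k) as (_ & _ & H). specialize (Hcpos k).
    apply Rmult_lt_reg_l with (N (c k)); auto.
    replace (N (c k) * (/ N (c k) * N (v k) * (INR k + 1))) with ((INR k + 1) * N (snd (p k))) by (unfold v; field; lra).
    unfold c; lra. }
  assert (HCc : forall k, C (c' k)) by (intro k; apply Hsc; auto; apply (Hp k)).
  assert (HCw : forall k, C (vsub (v' k) (c' k))).
  { intro k. replace (vsub (v' k) (c' k)) with (vscal (/ N (c k)) (vsub (v k) (c k))).
    - apply Hsc; auto. apply (Hp k).
    - apply vext; intro; unfold v', c'; unfold vsub, vscal; ring. }
  destruct (BW_N N c' 1 HN (fun k => Req_le _ _ (HNc k))) as [phi [l [Hphi Hl]]].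
  assert (HCl : C l) by (apply (closed_lim N C (fun k => c' (phi k)) l Hcl); auto).
  assert (HCml : C (vopp l)).
  { apply (closed_lim N C (fun k => vsub (v' (phi k)) (c' (phi k))) (vopp l) Hcl); auto.
    intros eps He. assert (He2 : 0 < eps / 2) by lra.
    destruct (Hl _ He2) as [M1 HM1].
    destruct (small_seq (fun k => N (v' k)) phi (fun k => Rlt_le _ _ (HNv k)) Hphi _ He2) as [M2 HM2].
    exists (max M1 M2). intros k Hk. specialize (HM1 k ltac:(lia)). specialize (HM2 k ltac:(lia)).
    cbv beta in *.
    replace (vsub (vsub (v' (phi k)) (c' (phi k))) (vopp l)) with (vadd (v' (phi k)) (vopp (vsub (c' (phi k)) l)))
      by (apply vext; intro; unfold vadd, vsub, vopp; ring).
    eapply Rle_lt_trans; [apply N_add; auto|]. rewrite N_opp by auto. lra. }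
  assert (Hl0 := Hanti l HCl HCml). subst l.
  destruct (Hl 1 Rlt_0_1) as [M HM]. specialize (HM M (le_n _)). cbv beta in HM.
  rewrite N_sub0, HNc in HM by auto. lra.
Qed.
Lemma N_tri0 {n} (N : E n -> R) x z : is_norm N -> N x <= N (vsub x z) + N z.
Proof.
  intro HN. pose proof (N_tri N x vzero z HN). rewrite !N_sub0 in H by auto. exact H.
Qed.

Lemma arch_nat X : exists k0, forall k, (k0 <= k)%nat -> X < INR k.
Proof.
  destruct (archimed (Rabs X)) as [Ha _].
  assert (0 <= up (Rabs X))%Z by (apply le_IZR; pose proof (Rabs_pos X); lra).
  exists (Z.to_nat (up (Rabs X))). intros k Hk.
  apply le_INR in Hk. rewrite INR_IZR_INZ, Z2Nat.id in Hk by auto.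
  pose proof (Rle_abs X). lra.
Qed.

Lemma lim_interval (a : nat -> R) s t : (forall k, 0 <= a k <= t) -> Un_cv a s -> 0 <= s <= t.
Proof.
  intros Ha Hc. split; apply Rnot_lt_le; intro Hs.
  - destruct (Hc (- s)) as [M HM]; [lra|]. specialize (HM M (le_n _)). specialize (Ha M).
    unfold Rdist, Rabs in HM. destruct (Rcase_abs (a M - s)); lra.
  - destruct (Hc (s - t)) as [M HM]; [lra|]. specialize (HM M (le_n _)). specialize (Ha M).
    unfold Rdist, Rabs in HM. destruct (Rcase_abs (a M - s)); lra.
Qed.

Lemma ball_in_U {n} (N : E n -> R) (K U : E n -> Prop) : is_norm N -> is_compact N K ->
  (forall x, K x -> U x) -> is_open N U ->
  exists r0, 0 < r0 /\ forall x y, K x -> N (vsub y x) <= r0 -> U y.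
Proof.
  intros HN HK HKU HU. apply NNPP; intro Hno.
  assert (Hk : forall k : nat, exists p : E n * E n, K (fst p) /\
     N (vsub (snd p) (fst p)) * (INR k + 1) <= 1 /\ ~ U (snd p)).
  { intro k. assert (Hpos : 0 < / (INR k + 1)) by (apply Rinv_0_lt_compat; pose proof (pos_INR k); lra).
    apply NNPP; intro H1. apply Hno. exists (/ (INR k + 1)). split; auto.
    intros x y Hx Hy. apply NNPP; intro Hu. apply H1. exists (x, y). simpl. repeat split; auto.
    apply Rmult_le_reg_r with (/ (INR k + 1)); auto. rewrite Rmult_assoc, Rinv_r; [lra|].
    pose proof (pos_INR k); lra. }
  apply choice2 in Hk. destruct Hk as [p Hp].
  destruct (HK (fun k => fst (p k)) (fun k => proj1 (Hp k))) as [phi [l [Hphi [Hl Hcv]]]].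
  destruct (HU l (HKU l Hl)) as [r [Hr Hb]].
  assert (Hr2 : 0 < r / 2) by lra.
  destruct (Hcv _ Hr2) as [M1 HM1].
  destruct (small_seq (fun k => N (vsub (snd (p k)) (fst (p k)))) phi (fun k => proj1 (proj2 (Hp k))) Hphi _ Hr2) as [M2 HM2].
  set (k := max M1 M2). specialize (HM1 k ltac:(unfold k; lia)). specialize (HM2 k ltac:(unfold k; lia)).
  cbv beta in *. apply (proj2 (proj2 (Hp (phi k)))). apply Hb.
  eapply Rle_lt_trans; [apply (N_tri N _ _ (fst (p (phi k))) HN)|]. lra.
Qed.

Lemma Kp_compact {n} (N : E n -> R) (K : E n -> Prop) r : is_norm N -> is_compact N K ->
  is_compact N (fun y => exists x, K x /\ N (vsub y x) <= r).
Proof.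
  intros HN HK u Hu. apply choice2 in Hu. destruct Hu as [x Hx].
  destruct (HK x (fun k => proj1 (Hx k))) as [phi [l [Hphi [Hl Hcv]]]].
  destruct (BW_N N (fun k => vsub (u (phi k)) (x (phi k))) r HN (fun k => proj2 (Hx (phi k)))) as [psi [w [Hpsi Hw]]].
  exists (fun k => phi (psi k)), (vadd l w). split; [apply sincr_comp; auto|]. split.
  - exists l. split; auto.
    replace (vsub (vadd l w) l) with w by (apply vext; intro; unfold vsub, vadd; ring).
    apply Rnot_lt_le; intro Hlt. assert (He : 0 < N w - r) by lra.
    destruct (Hw _ He) as [M HM]. specialize (HM M (le_n _)). cbv beta in HM.
    pose proof (N_tri0 N w (vsub (u (phi (psi M))) (x (phi (psi M)))) HN).
    rewrite N_sub_sym in H by auto. pose proof (proj2 (Hx (phi (psi M)))). lra.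
  - intros eps He. assert (He2 : 0 < eps / 2) by lra.
    destruct (Hw _ He2) as [M1 HM1]. destruct (seq_cv_sub N _ _ psi Hpsi Hcv _ He2) as [M2 HM2].
    exists (max M1 M2). intros k Hk. specialize (HM1 k ltac:(lia)). specialize (HM2 k ltac:(lia)).
    cbv beta in *.
    replace (vsub (u (phi (psi k))) (vadd l w)) with
      (vadd (vsub (vsub (u (phi (psi k))) (x (phi (psi k)))) w) (vsub (x (phi (psi k))) l))
      by (apply vext; intro; unfold vsub, vadd; ring).
    eapply Rle_lt_trans; [apply N_add; auto|]. lra.
Qed.

Lemma f_bounded {n} (N : E n -> R) (T : option R) (U K : E n -> Prop) (f : R -> E n -> E n) t :
  is_norm N -> cont_on N T U f -> in_time T t -> is_compact N K -> (forall y, K y -> U y) ->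
  exists M, forall tau y, 0 <= tau <= t -> K y -> N (f tau y) <= M.
Proof.
  intros HN Hf Ht HK HKU. apply NNPP; intro Hno.
  assert (Hk : forall k : nat, exists p : R * E n, (0 <= fst p <= t) /\ K (snd p) /\
     INR k < N (f (fst p) (snd p))).
  { intro k. apply NNPP; intro H1. apply Hno. exists (INR k). intros tau y Htau Hy.
    apply Rnot_lt_le; intro H2. apply H1. exists (tau, y); auto. }
  apply choice2 in Hk. destruct Hk as [p Hp].
  destruct (HK (fun k => snd (p k)) (fun k => proj1 (proj2 (Hp k)))) as [phi [l [Hphi [Hl Hcv]]]].
  destruct (BW1 (fun k => fst (p (phi k))) t) as [psi [s [Hpsi Hs]]].
  { intro k. destruct (Hp (phi k)) as [H _]. rewrite Rabs_right; lra. }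
  assert (Hsi : 0 <= s <= t).
  { apply (lim_interval (fun k => fst (p (phi (psi k))))); auto. intro; apply Hp. }
  assert (Hts : in_time T s).
  { destruct Ht as [Ht0 Ht1]. split; [lra|]. destruct T; auto; lra. }
  destruct (Hf s l Hts (HKU l Hl) 1 Rlt_0_1) as [d [Hd Hcont]].
  destruct (Hs d Hd) as [M1 HM1].
  destruct (seq_cv_sub N _ _ psi Hpsi Hcv d Hd) as [M2 HM2].
  destruct (arch_nat (1 + N (f s l))) as [M3 HM3].
  set (k := max M1 (max M2 M3)).
  specialize (HM1 k ltac:(unfold k; lia)). specialize (HM2 k ltac:(unfold k; lia)).
  specialize (HM3 k ltac:(unfold k; lia)). cbv beta in *. unfold Rdist in HM1.
  destruct (Hp (phi (psi k))) as (Htau & HK' & Hbig).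
  assert (Hin : in_time T (fst (p (phi (psi k))))).
  { destruct Ht as [Ht0 Ht1]. split; [lra|]. destruct T; auto; lra. }
  specialize (Hcont _ _ Hin (HKU _ HK') HM1 HM2).
  pose proof (N_tri0 N (f (fst (p (phi (psi k)))) (snd (p (phi (psi k))))) (f s l) HN).
  assert (INR k <= INR (phi (psi k))).
  { apply le_INR. apply (sincr_ge (fun k => phi (psi k))). apply sincr_comp; auto. }
  lra.
Qed.
Lemma N_sub_le {n} (N : E n -> R) p q : is_norm N -> N (vsub p q) <= N p + N q.
Proof.
  intro HN. replace (vsub p q) with (vadd p (vopp q)) by (apply vext; intro; unfold vsub, vadd, vopp; ring).
  rewrite <- (N_opp N q HN). apply N_add; auto.
Qed.

Theorem mainTheorem2 (n : nat) (C : E n -> Prop) (N : E n -> R)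
  (T : option R) (U : E n -> Prop) (f : R -> E n -> E n) :
  is_proper_cone C -> is_closed N C -> is_norm N ->
  pos_horizon T ->
  (exists x0, U x0) -> is_convex_set U -> is_open N U ->
  cont_on N T U f ->
  (forall t, in_time T t -> is_convex_map C U (f t)) ->
  forall (K : E n -> Prop) (t : R),
    is_compact N K -> (forall x, K x -> U x) -> in_time T t ->
    exists L : R, forall tau x1 x2, 0 <= tau <= t -> K x1 -> K x2 -> x1 <> x2 ->
      N (vsub (f tau x2) (f tau x1)) <= L * N (vsub x2 x1).
Proof.
  intros HC Hcl HN HT Hx0 HUc HUo Hf Hconv K t HK HKU Ht.
  destruct (normality C N HC Hcl HN) as [kap [Hkap Hnorm]].
  destruct (ball_in_U N K U HN HK HKU HUo) as [r0 [Hr0 Hball]].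
  set (r := r0 / 2). assert (Hr : 0 < r) by (unfold r; lra).
  set (Kp := fun y => exists x, K x /\ N (vsub y x) <= r).
  assert (HKp : is_compact N Kp) by (apply Kp_compact; auto).
  assert (HKpU : forall y, Kp y -> U y).
  { intros y [x [Hx Hy]]. apply (Hball x y Hx). unfold r in Hy; lra. }
  destruct (f_bounded N T U Kp f t HN Hf Ht HKp HKpU) as [M HM].
  exists ((4 * kap + 2) * M / r).
  intros tau x1 x2 Htau Hx1 Hx2 Hne.
  set (s := N (vsub x2 x1)).
  assert (Hs : 0 < s).
  { destruct (N_nonneg N (vsub x2 x1) HN) as [H|H]; auto. exfalso. apply Hne.
    symmetry in H. apply N_eq0 in H; auto. apply vext; intro i.
    assert (Hi := f_equal (fun v => v i) H). unfold vsub, vzero in Hi. simpl in Hi. lra. }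
  assert (Hin : in_time T tau).
  { destruct Ht as [Ht0 Ht1]. split; [lra|]. destruct T; auto; lra. }
  destruct (Hconv tau Hin) as [_ Hcm].
  set (g := f tau) in *. assert (HM' : forall tau0 y, 0 <= tau0 <= t -> Kp y -> N (f tau0 y) <= M) by exact HM.
  assert (HKpK : forall x, K x -> Kp x).
  { intros x Hx. exists x. split; auto. replace (vsub x x) with (@vzero n)
      by (apply vext; intro; unfold vsub, vzero; ring). rewrite N_zero; auto; lra. }
  assert (HM0 : 0 <= M).
  { pose proof (N_nonneg N (g x1) HN). pose proof (HM tau x1 Htau (HKpK x1 Hx1)). fold g in H0. lra. }
  set (a := s / (s + r)).
  assert (Ha : 0 <= a <= 1).
  { unfold a. split. apply Rlt_le, Rdiv_lt_0_compat; lra.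
    apply Rmult_le_reg_r with (s + r); [lra|]. unfold Rdiv. rewrite Rmult_assoc, Rinv_l; lra. }
  set (z := vadd x2 (vscal (r / s) (vsub x2 x1))).
  set (w := vadd x1 (vscal (r / s) (vsub x1 x2))).
  assert (Hz : Kp z).
  { exists x2. split; auto.
    replace (vsub z x2) with (vscal (r / s) (vsub x2 x1)) by (apply vext; intro; unfold z, vsub, vadd, vscal; ring).
    rewrite N_scal by auto. fold s. rewrite Rabs_right. right; field; lra.
    left; apply Rdiv_lt_0_compat; lra. }
  assert (Hw : Kp w).
  { exists x1. split; auto.
    replace (vsub w x1) with (vscal (r / s) (vsub x1 x2)) by (apply vext; intro; unfold w, vsub, vadd, vscal; ring).
    rewrite N_scal by auto. rewrite N_sub_sym by auto. fold s. rewrite Rabs_right. right; field; lra.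
    left; apply Rdiv_lt_0_compat; lra. }
  assert (Hc1 := Hcm z x1 a (HKpU _ Hz) (HKU _ Hx1) Ha).
  assert (Hc2 := Hcm w x2 a (HKpU _ Hw) (HKU _ Hx2) Ha).
  replace (vadd (vscal a z) (vscal (1 - a) x1)) with x2 in Hc1
    by (apply vext; intro; unfold a, z, vadd, vscal, vsub; field; lra).
  replace (vadd (vscal a w) (vscal (1 - a) x2)) with x1 in Hc2
    by (apply vext; intro; unfold a, w, vadd, vscal, vsub; field; lra).
  unfold cle in Hc1, Hc2.
  set (c1 := vsub (vadd (vscal a (g z)) (vscal (1 - a) (g x1))) (g x2)) in *.
  set (c2 := vsub (vadd (vscal a (g w)) (vscal (1 - a) (g x2))) (g x1)) in *.
  assert (Hn : N c2 <= kap * N (vadd c1 c2)).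
  { apply Hnorm; auto. replace (vsub (vadd c1 c2) c2) with c1 by (apply vext; intro; unfold vsub, vadd; ring).
    auto. }
  assert (HgM : forall y, Kp y -> N (g y) <= M) by (intros; apply HM; auto).
  assert (Hv : N (vadd c1 c2) <= a * (4 * M)).
  { replace (vadd c1 c2) with (vscal a (vadd (vsub (g z) (g x1)) (vsub (g w) (g x2))))
      by (apply vext; intro; unfold c1, c2, vsub, vadd, vscal; ring).
    rewrite N_scal by auto. rewrite Rabs_right by lra.
    apply Rmult_le_compat_l; [lra|].
    eapply Rle_trans; [apply N_add; auto|].
    pose proof (N_sub_le N (g z) (g x1) HN). pose proof (N_sub_le N (g w) (g x2) HN).
    pose proof (HgM _ Hz). pose proof (HgM _ Hw). pose proof (HgM _ (HKpK _ Hx1)). pose proof (HgM _ (HKpK _ Hx2)).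
    lra. }
  assert (Hd : N (vsub (g x2) (g x1)) <= N c2 + a * (2 * M)).
  { replace (vsub (g x2) (g x1)) with (vsub c2 (vscal a (vsub (g w) (g x2))))
      by (apply vext; intro; unfold c2, vsub, vadd, vscal; ring).
    eapply Rle_trans; [apply N_sub_le; auto|]. rewrite N_scal by auto. rewrite Rabs_right by lra.
    apply Rplus_le_compat_l. apply Rmult_le_compat_l; [lra|].
    pose proof (N_sub_le N (g w) (g x2) HN). pose proof (HgM _ Hw). pose proof (HgM _ (HKpK _ Hx2)). lra. }
  assert (Hfin : N (vsub (g x2) (g x1)) <= a * ((4 * kap + 2) * M)).
  { assert (kap * N (vadd c1 c2) <= kap * (a * (4 * M))) by (apply Rmult_le_compat_l; auto). nra. }
  assert (Har : a * r <= s).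
  { unfold a. apply Rmult_le_reg_r with (s + r); [lra|].
    replace (s / (s + r) * r * (s + r)) with (s * r) by (field; lra). nra. }
  eapply Rle_trans; [exact Hfin|].
  assert (HP : 0 <= (4 * kap + 2) * M) by nra.
  replace ((4 * kap + 2) * M / r * s) with ((4 * kap + 2) * M * (s / r)) by (field; lra).
  rewrite Rmult_comm. apply Rmult_le_compat_l; auto.
  apply Rmult_le_reg_r with r; auto. unfold Rdiv. rewrite Rmult_assoc, Rinv_l; lra.
Qed.
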